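(* Let $F$ be an infinite field of characteristic $3$, let $A_1$ be the $F$-vector space of linear forms in variables $x_1,\dots,x_m$, and let $U\subseteq A_1$ be a subspace with $\dim U=n$. Suppose $a_1<a_2<\dots<a_n$ are integers with $\mathrm{ms}_i(U)\ge a_i$ for all $1\le i\le n$. Then for each $0\le k\le n$ there exists a subspace $U_k\subseteq U$ with $\dim U_k=k$ such that $\mathrm{ms}_i(U_k)\ge a_{n-k+i}$ for all $1\le i\le k$.
   Context: For a linear form $u=\sum_i c_ix_i$, $\mathrm{supp}(u)=\{x_i:c_i\ne 0\}$. For a subspace $V$ of linear forms, $\mathrm{supp}(V)=\bigcup_{v\in V}\mathrm{supp}(v)$. For a subspace $U$ and $1\le i\le\dim U$, the minimum support function is $\mathrm{ms}_i(U)=\min\{|\mathrm{supp}(V)|: V\subseteq U \text{ a subspace}, \dim V=i\}$. *)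

(* Defs.v *)
From HB Require Import structures.
From mathcomp Require Import all_boot all_order all_algebra.
From mathcomp Require Import boolp.
Set Implicit Arguments. Unset Strict Implicit. Unset Printing Implicit Defensive.
Import GRing.Theory.
Local Open Scope ring_scope.

(* Linear forms in x_1..x_m over F are coefficient row vectors 'rV[F]_m:
   u = \sum_j u 0 j * x_(j+1). *)

Definition infinite_type (T : eqType) : Prop := forall s : seq T, exists x, x \notin s.

Definition supp_form (F : fieldType) (m : nat) (u : 'rV[F]_m) : {set 'I_m} :=
  [set j | u 0 j != 0].

Definition supp_space (F : fieldType) (m : nat) (V : {vspace 'rV[F]_m}) : {set 'I_m} :=
  [set j | `[< exists v, v \in V /\ j \in supp_form v >]].

(* ms_i(U) = min { |supp V| : V subspace of U, dim V = i } (0 if no such V). *)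
Definition ms_pred (F : fieldType) (m : nat) (i : nat) (U : {vspace 'rV[F]_m}) : pred nat :=
  fun s => `[< exists V : {vspace 'rV[F]_m}, (V <= U)%VS /\ \dim V = i /\ #|supp_space V| = s >].

Definition ms (F : fieldType) (m : nat) (i : nat) (U : {vspace 'rV[F]_m}) : nat :=
  match pselect (exists s, ms_pred i U s) with
  | left h => ex_minn h
  | right _ => 0%N
  end.

(* Main.v *)
Require Import Defs.
From HB Require Import structures.
From mathcomp Require Import all_boot all_order all_algebra.
From mathcomp Require Import boolp zify.
Import GRing.Theory Order.TTheory Num.Theory.
Local Open Scope ring_scope.
Set Implicit Arguments. Unset Strict Implicit.

Section Aux.
Variable F : fieldType.
Variable m : nat.
Implicit Types U V W X : {vspace 'rV[F]_m}.

Lemma dim_add_line X v : v \notin X -> \dim (X + <[v]>)%VS = (\dim X).+1.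
Proof.
move=> vX.
have v0 : v != 0 by apply: contraNneq vX => ->; exact: mem0v.
rewrite dimv_disjoint_sum ?dim_vline ?v0 ?addn1 //.
apply/eqP; rewrite -subv0; apply/subvP => w /memv_capP [wX /vlineP [c wE]].
rewrite memv0 wE; have [->|c0] := eqVneq c 0; first by rewrite scale0r.
exfalso; move/negP: vX; apply.
have -> : v = c^-1 *: w by rewrite wE scalerA mulVf // scale1r.
exact: memvZ.
Qed.

Lemma avoid (hinf : infinite_type F) U (Ws : seq {vspace 'rV[F]_m}) :
  (forall W, W \in Ws -> ~~ (U <= W)%VS) ->
  exists2 v, v \in U & forall W, W \in Ws -> v \notin W.
Proof.
elim: Ws => [|W1 Ws IH] hW.
  by exists 0; [exact: mem0v | move=> W].
have [y yU yWs] : exists2 y, y \in U & forall W, W \in Ws -> y \notin W.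
  by apply: IH => W WWs; apply: hW; rewrite inE WWs orbT.
have [x xU xW1] := subvPn (hW W1 (mem_head _ _)).
pose f (W : {vspace 'rV[F]_m}) : F :=
  match pselect (exists t, y + t *: x \in W) with
  | left h => xchoose h | right _ => 0 end.
have [t ts] := hinf (map f (W1 :: Ws)).
exists (y + t *: x); first by rewrite memvD // memvZ.
move=> W WL; apply/negP => hv.
have [t' [ht' ft']] : exists t', y + t' *: x \in W /\ f W = t'.
  exists (f W); split => //; rewrite /f; case: pselect => [h|hn].
    exact: (xchooseP h).
  by exfalso; apply: hn; exists t.
have tt' : t - t' != 0.
  rewrite subr_eq0; apply: contraNneq ts => ->; rewrite -ft'; exact: map_f.
have xW : x \in W.
  have e : (t - t') *: x = (y + t *: x) - (y + t' *: x).
    by rewrite scalerBl opprD addrACA subrr add0r.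
  have : (t - t') *: x \in W by rewrite e memvB.
  move=> h; have -> : x = (t - t')^-1 *: ((t - t') *: x)
    by rewrite scalerA mulVf // scale1r.
  exact: memvZ.
have yW : y \in W.
  have -> : y = (y + t *: x) - t *: x by rewrite addrK.
  by rewrite memvB // memvZ.
move: WL; rewrite inE => /orP [/eqP WE|WWs].
  by move: xW1; rewrite -WE xW.
by move: (yWs W WWs); rewrite yW.
Qed.


Lemma construct (hinf : infinite_type F) U (I : finType) (W : I -> {vspace 'rV[F]_m})
  (hW : forall i, (W i <= U)%VS) j : (j <= \dim U)%N ->
  exists Uj : {vspace 'rV[F]_m}, (Uj <= U)%VS /\ \dim Uj = j /\
    forall i, \dim (W i + Uj)%VS = minn (\dim U) (\dim (W i) + j).
Proof.
elim: j => [|j IH] hj.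
  exists 0%VS; split; first exact: sub0v.
  split; first exact: dimv0.
  move=> i; rewrite addv0 addn0; have := dimvS (hW i); lia.
have [Uj [UjU [dUj hUj]]] := IH (ltnW hj).
pose Ws := filter (fun X => ~~ (U <= X)%VS) (Uj :: [seq (W i + Uj)%VS | i <- enum I]).
have [v vU vWs] : exists2 v, v \in U & forall X, X \in Ws -> v \notin X.
  by apply: avoid => // X; rewrite mem_filter => /andP [].
have notUUj : ~~ (U <= Uj)%VS.
  by apply/negP => /dimvS; lia.
have vUj : v \notin Uj by apply: vWs; rewrite mem_filter notUUj mem_head.
exists (Uj + <[v]>)%VS; split; first by rewrite subv_add UjU -memvE vU.
split; first by rewrite dim_add_line // dUj.
move=> i; rewrite addvA.
have XU : (W i + Uj <= U)%VS by rewrite subv_add hW UjU.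
have := hUj i; have := dimvS XU; have := dimvS (hW i).
have [UX|nUX] := boolP (U <= W i + Uj)%VS.
  have h1 := dimvS UX.
  have h2 : \dim (W i + Uj + <[v]>)%VS = \dim U.
    apply/eqP; rewrite eqn_leq; apply/andP; split.
      by apply: dimvS; rewrite subv_add XU -memvE vU.
    by apply: dimvS; apply: subv_trans UX (addvSl _ _).
  rewrite h2; lia.
have vX : v \notin (W i + Uj)%VS.
  apply: vWs; rewrite mem_filter nUX /= inE; apply/orP; right.
  by apply: map_f; rewrite mem_enum.
rewrite dim_add_line //.
have : (\dim (W i + Uj) < \dim U)%N.
  rewrite ltnNge; apply: contra nUX => hd.
  have : (W i + Uj)%VS == U by rewrite eqEdim XU hd.
  by move/eqP => ->; exact: subvv.
lia.
Qed.

Definition diagS (T : {set 'I_m}) : 'rV[F]_m := \row_j (if j \in T then 0 else 1).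
Definition Cspace (T : {set 'I_m}) : {vspace 'rV[F]_m} :=
  lker (linfun (mulmxr (diag_mx (diagS T)))).

Lemma memCP (v : 'rV[F]_m) (T : {set 'I_m}) : reflect (forall j, j \notin T -> v 0 j = 0) (v \in Cspace T).
Proof.
rewrite /Cspace memv_ker lfunE /= mul_mx_diag.
apply: (iffP eqP) => [h j jT | h].
  by have := congr1 (fun M : 'rV_m => M 0 j) h; rewrite !mxE (negbTE jT) mulr1.
apply/matrixP => i j; rewrite !mxE (ord1 i).
by case: ifP => jT; [rewrite mulr0 | rewrite h ?jT // mulr1].
Qed.

End Aux.

Lemma ms_le (F : fieldType) (m i : nat) (U W : {vspace 'rV[F]_m}) :
  (W <= U)%VS -> \dim W = i -> (ms i U <= #|supp_space W|)%N.
Proof.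
move=> WU dW; rewrite /ms; case: pselect => [h|hn].
  case: ex_minnP => s _ hmin; apply: hmin.
  by apply/asboolP; exists W.
by exfalso; apply: hn; exists #|supp_space W|; apply/asboolP; exists W.
Qed.

Theorem lemma6 (F : fieldType) (hinf : infinite_type F) (hchar : (3 \in [pchar F])%N)
  (m : nat) (U : {vspace 'rV[F]_m}) (n : nat) (hdim : \dim U = n)
  (a : nat -> int)
  (hinc : forall i : nat, (1 <= i)%N -> (i < n)%N -> a i < a i.+1)
  (hms : forall i : nat, (1 <= i <= n)%N -> a i <= (ms i U)%:Z) :
  forall k : nat, (k <= n)%N ->
    exists Uk : {vspace 'rV[F]_m},
      (Uk <= U)%VS /\ \dim Uk = k /\
      (forall i : nat, (1 <= i <= k)%N -> a (n - k + i)%N <= (ms i Uk)%:Z).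
Proof.
have amono : forall p q, (1 <= p)%N -> (p <= q)%N -> (q <= n)%N -> a p <= a q.
  move=> p; elim=> [|q IH] p1 pq qn; first by lia.
  have [->|ne] := eqVneq p q.+1; first exact: lexx.
  have pq' : (p <= q)%N by lia.
  apply: le_trans (IH p1 pq' (ltnW qn)) _; apply: ltW; apply: hinc; lia.
move=> k kn.
pose W (S : {set 'I_m}) := (U :&: @Cspace F m S)%VS.
have hW : forall S, (W S <= U)%VS by move=> S; exact: capvSl.
have [Uk [UkU [dUk hUk]]] := construct hinf hW (j := k) ltac:(by rewrite hdim).
exists Uk; split => //; split => // i /andP [i1 ik].
have [V [VUk [dV _]]] := construct hinf (fun _ : unit => sub0v Uk) (j := i) ltac:(by rewrite dUk).
rewrite /ms; case: pselect => [h|hn]; last first.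
  by exfalso; apply: hn; exists #|supp_space V|; apply/asboolP; exists V.
case: ex_minnP => s /asboolP [V0 [V0Uk [dV0 hs]]] _.
rewrite -hs; set T := supp_space V0.
have V0W : (V0 <= W T)%VS.
  rewrite subv_cap (subv_trans V0Uk UkU) /=; apply/subvP => v vV0.
  apply/memCP => j jT; apply/eqP; apply/negPn/negP => hne.
  move/negP: jT; apply; rewrite /T /supp_space inE; apply/asboolP.
  by exists v; split => //; rewrite /supp_form inE.
have suppT : (#|supp_space (W T)| <= #|T|)%N.
  apply: subset_leq_card; apply/subsetP => j; rewrite inE => /asboolP [v [vW]].
  rewrite /supp_form inE => hv; move: vW; rewrite memv_cap => /andP [_ /memCP hC].
  by apply/negPn/negP => jT; move: hv; rewrite hC // eqxx.
have hsum := dimv_sum_cap (W T) Uk.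
have hcap : (i <= \dim (W T :&: Uk))%N.
  by rewrite -dV0; apply: dimvS; rewrite subv_cap V0W V0Uk.
have hWn : (\dim (W T) <= n)%N by rewrite -hdim; apply: dimvS.
have hUkT := hUk T; rewrite hdim in hUkT.
have hw : (n - k + i <= \dim (W T))%N by lia.
have hmsle := ms_le (hW T) (erefl (\dim (W T))).
apply: le_trans (amono (n - k + i)%N (\dim (W T)) ltac:(lia) hw hWn) _.
have hm := hms (\dim (W T)) ltac:(lia).
apply: le_trans hm _.
rewrite lez_nat; lia.
Qed.
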